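(* For any positive integer $n$ and any $m\in\mathbb{Z}$, \[ \sum_{l=0}^n\big(q^{-nm}z^{n-l}-z^l\big)\prod_{i=1}^l\frac{(q^m-z^i)(1-z^{n-i+1})}{(1-q^mz^{n-i+1})(1-z^i)}=0, \] as an identity of rational functions in $z$ and $q$.
   Context: The empty product (for $l=0$) equals $1$. *)

(* Defs.v *)
From HB Require Import structures.
From mathcomp Require Import all_boot all_order all_algebra.
Set Implicit Arguments. Unset Strict Implicit. Unset Printing Implicit Defensive.

(* Main.v *)
Require Import Defs.
From HB Require Import structures.
From mathcomp Require Import all_boot all_order all_algebra.
From mathcomp Require Import ring zify.
Import Order.TTheory GRing.Theory Num.Theory.
Local Open Scope ring_scope.

Fixpoint qbin {F : fieldType} (z : F) (n k : nat) : F :=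
  match n with
  | 0%N => if k == 0%N then 1 else 0
  | n'.+1 => (if k is k'.+1 then qbin z n' k' else 0) + z ^+ k * qbin z n' k
  end.

Definition poch {F : fieldType} (z a : F) (k : nat) : F :=
  \prod_(0 <= i < k) (1 - a * z ^+ i).

Lemma qbin0r (F : fieldType) (z : F) n : qbin z n 0 = 1.
Proof. by elim: n => [|n IH] //=; rewrite IH expr0 mul1r add0r. Qed.

Lemma qbin_gt (F : fieldType) (z : F) n k : (n < k)%N -> qbin z n k = 0.
Proof.
elim: n k => [|n IH] [|k] //= Hk.
by rewrite !IH ?mulr0 ?addr0 // ltnW.
Qed.

Lemma qbin_ratio (F : fieldType) (z : F) n k :
  qbin z n k * (1 - z ^+ (n - k)) = qbin z n k.+1 * (1 - z ^+ k.+1).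
Proof.
elim: n k => [|n IH] [|k] /=.
- by rewrite subrr mulr0 mul0r.
- by rewrite !mul0r.
- rewrite qbin0r expr0 mul1r add0r subn0.
  have H0 : qbin z n 1 * (1 - z) = 1 - z ^+ n.
    by have := IH 0%N; rewrite qbin0r mul1r subn0 expr1.
  transitivity ((1 - z) + z * (qbin z n 1 * (1 - z))); last first.
    by rewrite expr1; ring.
  by rewrite H0 exprS; ring.
- rewrite subSS mulrDl IH.
  have H2 := IH k.+1.
  case: (ltnP k n) => Hkn.
  + have E : z ^+ k.+1 * z ^+ (n - k) = z ^+ k.+2 * z ^+ (n - k.+1).
      by rewrite -!exprD; congr (_ ^+ _); lia.
    rewrite mulrDl -[z ^+ k.+2 * qbin z n k.+2 * _]mulrA -H2.
    transitivity (qbin z n k.+1 * (1 - z ^+ k.+1 * z ^+ (n - k))); first ring.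
    rewrite E; ring.
  + rewrite (@qbin_gt _ z n k.+1) ?(@qbin_gt _ z n k.+2); try lia.
    ring.
Qed.

Lemma qbin_sym (F : fieldType) (z : F) n k : (k <= n)%N -> qbin z n (n - k) = qbin z n k.
Proof.
elim: n k => [|n IH] k Hk.
- by have -> : k = 0%N by lia.
- have Hnn : qbin z n n = 1 by have := IH 0%N (leq0n n); rewrite subn0 qbin0r.
  case: k Hk => [|k] Hk.
    by rewrite subn0 /= Hnn (@qbin_gt _ z n n.+1) // qbin0r; ring.
  rewrite subSS.
  case: (ltnP k n) => Hkn.
  + have -> : (n - k = (n - k.+1).+1)%N by lia.
    rewrite /= IH; last lia.
    rewrite -subSn // subSS IH; last lia.
    have R := @qbin_ratio _ z n k.
    apply/eqP; rewrite -subr_eq0; apply/eqP.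
    transitivity (qbin z n k.+1 * (1 - z ^+ k.+1) - qbin z n k * (1 - z ^+ (n - k))); first ring.
    by rewrite R subrr.
  + have -> : k = n by lia.
    by rewrite subnn /= Hnn (@qbin_gt _ z n n.+1) // qbin0r; ring.
Qed.

Lemma poch0 (F : fieldType) (z a : F) : poch z a 0 = 1.
Proof. by rewrite /poch big_geq. Qed.

Lemma pochS (F : fieldType) (z a : F) k : poch z a k.+1 = (1 - a) * poch z (a * z) k.
Proof.
rewrite /poch big_nat_recl // expr0 mulr1; congr (_ * _).
by apply: eq_bigr => i _; rewrite exprS mulrA.
Qed.

Lemma pochSr (F : fieldType) (z a : F) k : poch z a k.+1 = poch z a k * (1 - a * z ^+ k).
Proof. by rewrite /poch big_nat_recr. Qed.

Lemma core (F : fieldType) (z : F) n : forall a b : F,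
  \sum_(0 <= k < n.+1) qbin z n k * b ^+ k * poch z a k * poch z b (n - k)
  = poch z (a * b) n.
Proof.
elim: n => [|n IH] a b.
  by rewrite big_nat1 /= !poch0 !mulr1.
under eq_bigr => k _ do rewrite [qbin z n.+1 k]/= !mulrDl.
rewrite big_split /=.
rewrite big_nat_recl // mul0r mul0r mul0r add0r.
rewrite addrC big_nat_recr //= (@qbin_gt _ z n n.+1) // mulr0 !mul0r addr0.
have -> : \sum_(0 <= i < n.+1) qbin z n i * b ^+ i.+1 * poch z a i.+1 * poch z b (n.+1 - i.+1)
   = b * (1 - a) * \sum_(0 <= i < n.+1) qbin z n i * b ^+ i * poch z (a * z) i * poch z b (n - i).
  rewrite mulr_sumr; apply: eq_bigr => i _.
  rewrite subSS pochS exprS.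
  move: (qbin z n i) (b ^+ i) (poch z (a * z) i) (poch z b (n - i)) => x1 x2 x3 x4; ring.
have -> : \sum_(0 <= i < n.+1) z ^+ i * qbin z n i * b ^+ i * poch z a i * poch z b (n.+1 - i)
   = (1 - b) * \sum_(0 <= i < n.+1) qbin z n i * (b * z) ^+ i * poch z a i * poch z (b * z) (n - i).
  rewrite mulr_sumr; apply: eq_big_nat => i /andP [_ Hi].
  rewrite subSn; last by rewrite -ltnS.
  rewrite pochS exprMn.
  move: (qbin z n i) (b ^+ i) (z ^+ i) (poch z a i) (poch z (b * z) (n - i)) => x1 x2 x3 x4 x5; ring.
rewrite !IH pochS.
have -> : a * z * b = a * (b * z) by ring.
have -> : a * b * z = a * (b * z) by ring.
move: (poch z (a * (b * z)) n) => x; ring.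
Qed.




Lemma aW (F : fieldType) (z Q : F) n l : (l <= n)%N ->
  (forall i : nat, (1 <= i <= n)%N -> 1 - z ^+ i != 0) ->
  (forall i : nat, (1 <= i <= n)%N -> 1 - Q * z ^+ i != 0) ->
  (\prod_(1 <= i < l.+1)
        ((Q - z ^+ i) * (1 - z ^+ (n - i).+1) /
         ((1 - Q * z ^+ (n - i).+1) * (1 - z ^+ i)))) * poch z (Q * z) n
  = qbin z n l * \prod_(1 <= i < l.+1) (Q - z ^+ i) * poch z (Q * z) (n - l).
Proof.
move=> + Hz HQ; elim: l => [|l IH] Hl.
  by rewrite !big_geq // qbin0r subn0 !mul1r.
rewrite (big_nat_recr l.+1 1) // (big_nat_recr l.+1 1 (fun i => Q - z ^+ i)) //= mulrAC IH; last by apply: ltnW.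
set N := (n - l.+1)%N.
have eN : (n - l = N.+1)%N by rewrite /N; lia.
rewrite eN pochSr.
have R := @qbin_ratio _ z n l; rewrite eN in R.
have hN : 1 - z ^+ N.+1 != 0 by apply: Hz; rewrite /N; lia.
have hl : 1 - z ^+ l.+1 != 0 by apply: Hz; lia.
have hQ : 1 - Q * z ^+ N.+1 != 0 by apply: HQ; rewrite /N; lia.
have -> : qbin z n l = qbin z n l.+1 * (1 - z ^+ l.+1) / (1 - z ^+ N.+1) by rewrite -R mulfK.
rewrite -(mulrA Q z) -exprS.
move: hN hl hQ.
move: (qbin z n l.+1) (\prod_(1 <= i < l.+1) (Q - z ^+ i)) (poch z (Q * z) N) (z ^+ N.+1) (z ^+ l.+1).
move=> x1 x2 x3 u v hN hl hQ.
field.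
by rewrite hN hl hQ.
Qed.

Lemma Ppoch (F : fieldType) (z Q : F) l : Q != 0 ->
  \prod_(1 <= i < l.+1) (Q - z ^+ i) = Q ^+ l * poch z (z * Q^-1) l.
Proof.
move=> Q0; elim: l => [|l IH].
  by rewrite big_geq // poch0 expr0 mulr1.
rewrite big_nat_recr //= IH pochSr exprSr exprS.
move: (poch z (z * Q^-1) l) (Q ^+ l) (z ^+ l) => x y u.
field; exact: Q0.
Qed.

Theorem corollary3p4 (F : fieldType) (n : nat) (m : int) (q z : F) :
  (0 < n)%N -> q != 0 ->
  (forall i : nat, (1 <= i <= n)%N -> 1 - z ^+ i != 0) ->
  (forall i : nat, (1 <= i <= n)%N -> 1 - q ^ m * z ^+ i != 0) ->
  \sum_(0 <= l < n.+1)
     (q ^ (- (n%:Z * m)) * z ^+ (n - l) - z ^+ l) *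
     \prod_(1 <= i < l.+1)
        ((q ^ m - z ^+ i) * (1 - z ^+ (n - i).+1) /
         ((1 - q ^ m * z ^+ (n - i).+1) * (1 - z ^+ i))) = 0.
Proof.
move=> n0 q0 Hz HQ.
have eX : q ^ (- (n%:Z * m)) = (q ^ m)^-1 ^+ n.
  by rewrite -invr_expz mulrC -exprz_exp -exprnP exprVn.
rewrite eX.
move: HQ; set Q := q ^ m => HQ.
have Q0 : Q != 0 by apply: expfz_neq0.
set X := Q^-1.
have RnNZ : poch z (Q * z) n != 0.
  rewrite /poch prodf_seq_neq0; apply/allP => i; rewrite mem_iota add0n => /andP [_ Hi] /=.
  rewrite -mulrA -exprS; apply: HQ; lia.
apply: (mulIf RnNZ); rewrite mul0r mulr_suml.
pose W l := qbin z n l * \prod_(1 <= i < l.+1) (Q - z ^+ i) * poch z (Q * z) (n - l).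
transitivity (X ^+ n * \sum_(0 <= l < n.+1) z ^+ (n - l) * W l - \sum_(0 <= l < n.+1) z ^+ l * W l).
  rewrite mulr_sumr -sumrB; apply: eq_big_nat => l /andP [_ Hl].
  by rewrite -mulrA aW // /W mulrBl !mulrA.
have S2 : \sum_(0 <= l < n.+1) z ^+ l * W l = poch z (z * z) n.
  have := @core _ z n (z * X) (Q * z).
  rewrite (_ : z * X * (Q * z) = z * z); last by rewrite /X; field.
  move <-; apply: eq_big_nat => l _.
  rewrite /W Ppoch // exprMn.
  move: (qbin z n l) (poch z (z * X) l) (poch z (Q * z) (n - l)) (Q ^+ l) (z ^+ l) => x1 x2 x3 x4 x5; ring.
have S1 : \sum_(0 <= l < n.+1) z ^+ (n - l) * W l = Q ^+ n * poch z (z * z) n.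
  have := @core _ z n (Q * z) (z * X).
  rewrite (_ : Q * z * (z * X) = z * z); last by rewrite /X; field.
  move <-; rewrite big_nat_rev mulr_sumr; apply: eq_big_nat => l /andP [_ Hl].
  rewrite add0n subSS /W subKn; last by rewrite -ltnS.
  rewrite qbin_sym; last by rewrite -ltnS.
  rewrite Ppoch // exprMn.
  have -> : Q ^+ n = Q ^+ (n - l) * Q ^+ l by rewrite -exprD subnK // -ltnS.
  have QlX : Q ^+ l * X ^+ l = 1 by rewrite /X exprVn mulfV // expf_neq0.
  move: QlX; move: (qbin z n l) (poch z (z * X) (n - l)) (poch z (Q * z) l) (Q ^+ l) (X ^+ l) (Q ^+ (n - l)) (z ^+ l) => x1 x2 x3 x4 x5 x6 x7 E.
  transitivity (x1 * x2 * x3 * x6 * x7 * (x4 * x5)); last by ring.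
  by rewrite E mulr1; ring.
by rewrite S1 S2 mulrA -exprMn /X mulVf // expr1n mul1r subrr.
Qed.
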